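(* Let $T=\mathbb{R}^k/\mathbb{Z}^k$, let $m$ and $C$ be natural numbers, and let $\Lambda\leq T[m]$ be a subgroup with $[T[m]:\Lambda]\leq C$. Then there is a natural number $m'$ satisfying $m'\geq m/C!$ and $T[m']\leq\Lambda$.
   Context: For a natural number $m$, $T[m]$ denotes the $m$-torsion subgroup of $T$. *)

(* Defs.v *)
From HB Require Import structures.
From mathcomp Require Import all_boot all_order all_algebra.
From mathcomp Require Import reals.
Set Implicit Arguments. Unset Strict Implicit. Unset Printing Implicit Defensive.
Import Order.TTheory GRing.Theory Num.Theory.
Local Open Scope ring_scope.

(* The torus T = R^k / Z^k is handled through representatives in R^k:
   a subset of T is encoded by its preimage in R^k (a Z^k-invariant subset),
   subgroups of T correspond exactly to subgroups of R^k containing Z^k. *)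

Definition lattice_pt (R : realType) (k : nat) (x : 'rV[R]_k) : Prop :=
  forall i, x ord0 i \is a Num.int.

(* preimage in R^k of the m-torsion subgroup T[m] = {t in T | m t = 0} *)
Definition torsion (R : realType) (k m : nat) (x : 'rV[R]_k) : Prop :=
  lattice_pt (x *+ m).

Definition torus_subgroup (R : realType) (k : nat) (L : 'rV[R]_k -> Prop) : Prop :=
  (forall x, lattice_pt x -> L x) /\ (forall x y, L x -> L y -> L (x - y)).

(* [T[m] : L] <= C, for L <= T[m]: T[m] is covered by at most C cosets of L *)
Definition torsion_index_le (R : realType) (k m : nat)
  (L : 'rV[R]_k -> Prop) (C : nat) : Prop :=
  exists s : seq 'rV[R]_k, (size s <= C)%N /\
    forall x, torsion m x -> exists2 c, c \in s & L (x - c).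

(* Main.v *)
Require Import Defs.
From HB Require Import structures.
From mathcomp Require Import all_boot all_order all_algebra.
From mathcomp Require Import reals.
From mathcomp Require boolp.
From mathcomp Require Import ring lra.
Import Order.TTheory GRing.Theory Num.Theory.
Local Open Scope ring_scope.

Section H.
Variables (R : realType) (k : nat).
Implicit Types (x y : 'rV[R]_k).

Lemma lat_scale (z : int) x : lattice_pt x -> lattice_pt (z%:~R *: x).
Proof.
move=> hx i; rewrite mxE; apply: rpredM; last exact: hx.
exact: rpred_int.
Qed.

Lemma lat_nat (n : nat) x : lattice_pt x -> lattice_pt (x *+ n).
Proof. by move=> hx; rewrite -scaler_nat -[n%:R]/((n%:Z)%:~R); apply: lat_scale. Qed.

Lemma lat0 : lattice_pt (0 : 'rV[R]_k).
Proof. by move=> i; rewrite mxE. Qed.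

Lemma tor_nat (m n : nat) x : torsion m x -> torsion m (x *+ n).
Proof. by rewrite /torsion -mulrnA mulnC mulrnA; apply: lat_nat. Qed.

Variable L : 'rV[R]_k -> Prop.
Hypothesis HL : torus_subgroup L.

Lemma L0 : L 0.
Proof. by case: HL => h _; apply: h; apply: lat0. Qed.

Lemma LN x : L x -> L (- x).
Proof. by move=> hx; case: HL => _ h; rewrite -sub0r; apply: h => //; apply: L0. Qed.

Lemma LD x y : L x -> L y -> L (x + y).
Proof. by move=> hx hy; case: HL => _ h; rewrite -[y]opprK; apply: h => //; apply: LN. Qed.

Lemma Lnat x (n : nat) : L x -> L (x *+ n).
Proof. move=> hx; elim: n => [|n IH]; first by rewrite mulr0n; apply: L0.
by rewrite mulrS; apply: LD. Qed.

End H.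

Theorem lemma3p12 (R : realType) (k m C : nat) (L : 'rV[R]_k -> Prop) :
  torus_subgroup L ->
  (forall x, L x -> torsion m x) ->
  torsion_index_le m L C ->
  exists m' : nat, (m%:R / (C`!)%:R <= m'%:R :> R) /\
    (forall x, torsion m' x -> L x).
Proof.
move=> HL _ [s [hs hcov]].
have step1 : forall x, torsion m x -> L (x *+ C`!).
  move=> x hx.
  have hc : forall i : nat, exists c, c \in s /\ L (x *+ i - c).
    move=> i; have [c cs hc] := hcov _ (@tor_nat _ _ _ i _ hx); by exists c.
  have [f hf] := boolp.choice hc.
  set t := [seq f i | i <- iota 0 C.+1].
  have : ~~ uniq t.
    apply/negP => ut.
    have sub : {subset t <= s}.
      by move=> y /mapP [i _ ->]; case: (hf i).
    have := uniq_leq_size ut sub; rewrite size_map size_iota => h.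
    by have := leq_trans h hs; rewrite ltnn.
  case/(uniqPn 0) => i [j [ij]]; rewrite size_map size_iota => jC.
  rewrite !(nth_map 0%N) ?size_iota ?(ltn_trans ij) // !nth_iota ?(ltn_trans ij) // !add0n => fij.
  have Ld : L (x *+ (j - i)).
    case: (hf i) => _ hi; case: (hf j) => _ hj.
    case: HL => _ hsub; have := hsub _ _ hj hi.
    rewrite fij opprB addrA subrK mulrnBr //; exact: ltnW.
  have dv : (j - i %| C`!)%N.
    apply: dvdn_fact; rewrite subn_gt0 ij /=.
    by apply: leq_trans (leq_subr _ _) _; rewrite -ltnS.
  by rewrite -(divnK dv) mulnC mulrnA; apply: Lnat.
set F := C`!.
have F0 : (0 < F)%N by apply: fact_gt0.
set g := gcdn m F.
have g0 : (0 < g)%N by rewrite gcdn_gt0 F0 orbT.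
set m' := (m %/ g)%N.
set c := (F %/ g)%N.
have em : m = (m' * g)%N by rewrite divnK // dvdn_gcdl.
have eF : F = (c * g)%N by rewrite divnK // dvdn_gcdr.
have cop : gcdn c m' = 1%N.
  have : g = (gcdn c m' * g)%N by rewrite muln_gcdl -eF -em gcdnC.
  by move/esym/eqP; rewrite -{2}[g]mul1n eqn_pmul2r // => /eqP.
exists m'; split.
  rewrite ler_pdivrMr ?ltr0n // -natrM ler_nat {1}em leq_mul2l.
  by rewrite dvdn_leq // ?dvdn_gcdr // orbT.
move=> y hy.
have [u [v huv]] := Bezoutz c m'.
have {}huv : u * c%:Z + v * m'%:Z = 1 by rewrite huv /gcdz !absz_nat cop.
set x := ((g%:R)^-1 * u%:~R) *: y.
have hx : torsion m x.
  rewrite /torsion /x -scaler_nat scalerA.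
  have -> : m%:R * ((g%:R)^-1 * u%:~R) = u%:~R * m'%:R :> R.
    rewrite em natrM; field; by rewrite pnatr_eq0 -lt0n.
  by rewrite -scalerA scaler_nat; apply: lat_scale.
have := step1 _ hx.
have -> : x *+ F = y - v%:~R *: (y *+ m').
  rewrite /x -!scaler_nat !scalerA.
  transitivity ((1 - (v%:~R * m'%:R)) *: y); last by rewrite scalerBl scale1r.
  congr (_ *: _).
  have : (u * c%:Z + v * m'%:Z)%:~R = 1 :> R by rewrite huv.
  rewrite intrD !intrM -!pmulrn /= => h.
  rewrite eF natrM.
  have -> : c%:R * g%:R * (g%:R^-1 * u%:~R) = u%:~R * c%:R :> R.
    by field; rewrite pnatr_eq0 -lt0n.
  by apply/eqP; rewrite eq_sym subr_eq h.
move=> hL; have := @LD _ _ _ HL _ _ hL (proj1 HL _ (@lat_scale _ _ v _ hy)).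
by rewrite subrK.
Qed.
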